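(* Let $(X,<)$ be a Banach lattice with lattice norm $\|\cdot\|$, and let $A=(\alpha_{ij})_{i,j\in\mathbb{N}}$ be a regular matrix with non-negative entries. Then the $A$-convergence on $X$ preserves order-inequalities.
   Context: A non-negative matrix $A=(\alpha_{ij})$ is regular if $\sup_n\sum_j\alpha_{nj}<\infty$, $\lim_n\alpha_{ni}=0$ for each $i$, and $\lim_n\sum_i\alpha_{ni}=1$. A sequence $(x_j)$ in $X$ is $A$-convergent to $L$ (written $x_j\overset{A}{\longrightarrow}L$) if $\lim_n\sum_j\alpha_{nj}x_j=L$ in norm; the $A$-convergence is the summability method with domain $\mathcal{D}_A$ the $A$-convergent sequences. For $u\in X$, $|u|=u\vee(-u)$. A summability method $\mathcal{R}$ preserves order-inequalities if: whenever $(w_n),(x_n),(y_n),(z_n)\in\mathcal{D}_{\mathcal{R}}$, $w,x,y,z\in X$ and $C>0$ satisfy, for all $n$, $-C[(x_n-x)+(y_n-y)+(z_n-z)]<w_n-w<C[(x_n-x)+(y_n-y)+(z_n-z)]$ in the lattice order, and $x_n\overset{\mathcal{R}}{\longrightarrow}x$, $y_n\overset{\mathcal{R}}{\longrightarrow}y$, $z_n\overset{\mathcal{R}}{\longrightarrow}z$, then $w_n\overset{\mathcal{R}}{\longrightarrow}w$. *)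

(* Defs.v *)
From HB Require Import structures.
From mathcomp Require Import all_boot all_order all_algebra.
From mathcomp Require Import all_classical all_reals all_analysis.
Set Implicit Arguments. Unset Strict Implicit. Unset Printing Implicit Defensive.
Import Order.TTheory GRing.Theory Num.Theory.
Import numFieldNormedType.Exports.
Local Open Scope classical_set_scope.
Local Open Scope ring_scope.

Definition absl (R : realType) (X : completeNormedModType R)
  (vee : X -> X -> X) (u : X) : X := vee u (- u).

Record banach_lattice (R : realType) (X : completeNormedModType R)
  (le : X -> X -> Prop) (vee : X -> X -> X) : Prop := {
  bl_refl : forall x, le x x;
  bl_antisym : forall x y, le x y -> le y x -> x = y;
  bl_trans : forall x y z, le x y -> le y z -> le x z;
  bl_add : forall x y z, le x y -> le (x + z) (y + z);
  bl_scale : forall (a : R) x y, 0 <= a -> le x y -> le (a *: x) (a *: y);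
  bl_vee_ubl : forall x y, le x (vee x y);
  bl_vee_ubr : forall x y, le y (vee x y);
  bl_vee_least : forall x y z, le x z -> le y z -> le (vee x y) z;
  bl_norm : forall x y, le (absl vee x) (absl vee y) -> `|x| <= `|y|
}.

Definition nonneg_matrix (R : realType) (alpha : nat -> nat -> R) : Prop :=
  forall n j, 0 <= alpha n j.

Definition regular_matrix (R : realType) (alpha : nat -> nat -> R) : Prop :=
  (exists M : R, forall n N, \sum_(0 <= j < N) alpha n j <= M) /\
  (forall i, (fun n => alpha n i) @ \oo --> (0 : R)) /\
  (exists r : nat -> R,
     (forall n, (fun N => \sum_(0 <= j < N) alpha n j) @ \oo --> r n) /\
     r @ \oo --> (1 : R)).

Definition A_converges (R : realType) (X : completeNormedModType R)
  (alpha : nat -> nat -> R) (x : nat -> X) (L : X) : Prop :=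
  exists y : nat -> X,
    (forall n, (fun N => \sum_(0 <= j < N) alpha n j *: x j) @ \oo --> y n) /\
    y @ \oo --> L.

Definition A_domain (R : realType) (X : completeNormedModType R)
  (alpha : nat -> nat -> R) (x : nat -> X) : Prop :=
  exists L : X, A_converges alpha x L.

Definition preserves_order_inequalities (R : realType)
  (X : completeNormedModType R) (le : X -> X -> Prop)
  (alpha : nat -> nat -> R) : Prop :=
  forall (wn xn yn zn : nat -> X) (w x y z : X) (C : R),
    A_domain alpha wn -> A_domain alpha xn ->
    A_domain alpha yn -> A_domain alpha zn ->
    0 < C ->
    (forall n,
       le (- (C *: ((xn n - x) + (yn n - y) + (zn n - z)))) (wn n - w) /\
       le (wn n - w) (C *: ((xn n - x) + (yn n - y) + (zn n - z)))) ->
    A_converges alpha xn x -> A_converges alpha yn y ->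
    A_converges alpha zn z ->
    A_converges alpha wn w.

(* Main.v *)
Require Import Defs.
From mathcomp Require Import all_boot all_order all_algebra.
From mathcomp Require Import all_classical all_reals all_analysis.
Import Order.TTheory GRing.Theory Num.Theory.
Import numFieldNormedType.Exports.
Local Open Scope classical_set_scope.
Local Open Scope ring_scope.

Section Aux.
Variables (R : realType) (X : completeNormedModType R)
  (le : X -> X -> Prop) (vee : X -> X -> X) (HX : banach_lattice le vee).

Lemma le_addLR (a b c d : X) : le a b -> le c d -> le (a + c) (b + d).
Proof.
move=> h1 h2; apply: (bl_trans HX (y := b + c)); first exact: (bl_add HX).
rewrite (addrC b c) (addrC b d); exact: (bl_add HX).
Qed.

Lemma le_sums (alpha : nat -> R) (d a : nat -> X) :
  (forall j, 0 <= alpha j) ->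
  (forall j, le (- a j) (d j) /\ le (d j) (a j)) -> forall N,
  le (- \sum_(0 <= j < N) alpha j *: a j) (\sum_(0 <= j < N) alpha j *: d j) /\
  le (\sum_(0 <= j < N) alpha j *: d j) (\sum_(0 <= j < N) alpha j *: a j).
Proof.
move=> h0 hj; elim=> [|N [IH1 IH2]].
  by rewrite !big_geq // oppr0; split; apply: (bl_refl HX).
rewrite !big_nat_recr //= opprD; have [h1 h2] := hj N; split.
  apply: le_addLR => //; rewrite -scalerN; exact: (bl_scale HX).
apply: le_addLR => //; exact: (bl_scale HX).
Qed.

Lemma abs_le (d a : X) : le (- a) d -> le d a -> `|d| <= `|a|.
Proof.
move=> h1 h2; apply: (bl_norm HX); rewrite /absl.
apply: (bl_trans HX _ (bl_vee_ubl HX a (- a))).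
apply: (bl_vee_least HX) => //.
have := bl_add HX (a - d) h1.
by rewrite addrA addNr add0r addrC addrNK.
Qed.

End Aux.

Theorem theorem3p8 (R : realType) (X : completeNormedModType R)
  (le : X -> X -> Prop) (vee : X -> X -> X)
  (HX : banach_lattice le vee)
  (alpha : nat -> nat -> R)
  (Hnn : nonneg_matrix alpha) (Hreg : regular_matrix alpha) :
  preserves_order_inequalities le alpha.
Proof.
move=> wn xn yn zn w x y z C [Lw [yw [Hyw _]]] _ _ _ C0 Hle
  [yx [Hyx Hyxc]] [yy [Hyy Hyyc]] [yz [Hyz Hyzc]].
case: Hreg => _ [_ [r [Hr Hr1]]].
have shift : forall (u : nat -> X) (yu : nat -> X) (v : X) n,
  (fun N => \sum_(0 <= j < N) alpha n j *: u j) @ \oo --> yu n ->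
  (fun N => \sum_(0 <= j < N) alpha n j *: (u j - v)) @ \oo --> yu n - r n *: v.
  move=> u yu v n h.
  have -> : (fun N => \sum_(0 <= j < N) alpha n j *: (u j - v)) =
     (fun N => \sum_(0 <= j < N) alpha n j *: u j
               - (\sum_(0 <= j < N) alpha n j) *: v).
    apply: funext => N; rewrite scaler_suml -sumrB; apply: eq_bigr => j _.
    by rewrite scalerBr.
  apply: cvgB => //; apply: cvgZ; [exact: (Hr n) | exact: cvg_cst].
have Hb : forall n, `|yw n - r n *: w| <=
   `|C *: ((yx n - r n *: x) + (yy n - r n *: y) + (yz n - r n *: z))|.
  move=> n.
  pose P := fun N => \sum_(0 <= j < N) alpha n j *: (wn j - w).
  pose Q := fun N => \sum_(0 <= j < N) alpha n j *:
                       (C *: ((xn j - x) + (yn j - y) + (zn j - z))).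
  have hP : P @ \oo --> yw n - r n *: w := shift _ _ _ _ (Hyw n).
  have hQ : Q @ \oo --> C *: ((yx n - r n *: x) + (yy n - r n *: y) + (yz n - r n *: z)).
    have -> : Q = fun N => C *: (\sum_(0 <= j < N) alpha n j *: (xn j - x)
       + \sum_(0 <= j < N) alpha n j *: (yn j - y)
       + \sum_(0 <= j < N) alpha n j *: (zn j - z)).
      apply: funext => N; rewrite /Q -!big_split scaler_sumr /=.
      apply: eq_bigr => j _.
      by rewrite scalerA mulrC -scalerA !scalerDr.
    apply: cvgZ; first exact: cvg_cst.
    apply: cvgD; first apply: cvgD.
    - exact: shift.
    - exact: shift.
    - exact: shift.
  rewrite -(cvg_lim _ (cvg_norm hP)) // -(cvg_lim _ (cvg_norm hQ)) //.
  apply: ler_lim.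
  - by apply/cvg_ex; eexists; exact: (cvg_norm hP).
  - by apply/cvg_ex; eexists; exact: (cvg_norm hQ).
  apply: nearW => N.
  have [h1 h2] := @le_sums _ _ _ _ HX (alpha n) (fun j => wn j - w)
    (fun j => C *: ((xn j - x) + (yn j - y) + (zn j - z))) (Hnn n) Hle N.
  exact: (@abs_le _ _ _ _ HX _ _ h1 h2).
have hT : (fun n => C *: ((yx n - r n *: x) + (yy n - r n *: y)
                          + (yz n - r n *: z))) @ \oo --> (0:X).
  have -> : (0:X) = C *: ((x - 1 *: x) + (y - 1 *: y) + (z - 1 *: z)).
    by rewrite !scale1r !subrr !addr0 scaler0.
  apply: cvgZ; first exact: cvg_cst.
  apply: cvgD; first apply: cvgD.
  - apply: cvgB => //; apply: cvgZ => //; exact: cvg_cst.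
  - apply: cvgB => //; apply: cvgZ => //; exact: cvg_cst.
  - apply: cvgB => //; apply: cvgZ => //; exact: cvg_cst.
have he : (fun n => yw n - r n *: w) @ \oo --> (0:X).
  apply/norm_cvg0P.
  apply: (squeeze_cvgr (f := fun=> 0) (h := fun n => `|C *: ((yx n - r n *: x)
     + (yy n - r n *: y) + (yz n - r n *: z))|)).
  - by apply: nearW => n; rewrite normr_ge0 Hb.
  - exact: cvg_cst.
  - by rewrite -(normr0 X); exact: cvg_norm hT.
exists yw; split; first exact: Hyw.
have -> : yw = fun n => (yw n - r n *: w) + r n *: w.
  by apply: funext => n; rewrite subrK.
rewrite -[w in _ --> w]add0r.
apply: cvgD; first exact: he.
rewrite -[w in _ --> w]scale1r.
apply: cvgZ; [exact: Hr1 | exact: cvg_cst].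
Qed.
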